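(* Let $n\ge 3$, $0<m<\frac{n-2}{n}$, $\rho>0$, and let $\alpha,\beta$ satisfy $\alpha=\frac{2\beta+\rho}{1-m}$, $\beta>\frac{m\rho}{n-2-mn}$, and $\alpha>n\beta$. Let $v$ be a radially symmetric solution of $$\frac{n-1}{m}\Delta v^m+\alpha v+\beta x\cdot\nabla v=0,\quad v>0,\quad\text{in }\mathbb{R}^n,$$ let $w(r)=r^2v(r)^{1-m}$ and $w_\infty=\frac{2(n-1)(n(1-m)-2)}{(1-m)(\alpha(1-m)-2\beta)}$. Then there exists a constant $\varepsilon\in(0,\min(1,w_\infty/2))$ such that for every $R_0>1$ there exists $r'>R_0$ with $w(r')\ge\varepsilon$.
   Context: $v(r)$ denotes the value of the radially symmetric function $v$ at any point with $|x|=r$. *)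

(* Defs.v *)
From HB Require Import structures.
From mathcomp Require Import all_boot all_order all_algebra.
From mathcomp Require Import all_classical all_reals all_analysis.
Set Implicit Arguments. Unset Strict Implicit. Unset Printing Implicit Defensive.
Import Order.TTheory GRing.Theory Num.Theory.
Import numFieldNormedType.Exports.
Local Open Scope ring_scope.

(* Euclidean norm |x| on R^n (the library norm on matrices is the sup norm). *)
Definition enorm {R : realType} {n : nat} (x : 'rV[R]_n) : R :=
  Num.sqrt (\sum_(i < n) x ord0 i ^+ 2).

Definition ebasis {R : realType} {n : nat} (i : 'I_n) : 'rV[R]_n :=
  delta_mx ord0 i.

Definition partial {R : realType} {n : nat} (f : 'rV[R]_n -> R) (i : 'I_n)
  (x : 'rV[R]_n) : R := derive f x (ebasis i).

Definition laplacian {R : realType} {n : nat} (f : 'rV[R]_n -> R)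
  (x : 'rV[R]_n) : R := \sum_(i < n) partial (partial f i) i x.

Definition xdotgrad {R : realType} {n : nat} (f : 'rV[R]_n -> R)
  (x : 'rV[R]_n) : R := \sum_(i < n) x ord0 i * partial f i x.

Definition is_solution {R : realType} {n : nat} (m alpha beta : R)
  (v : 'rV[R]_n -> R) : Prop :=
  forall x : 'rV[R]_n,
    [/\ 0 < v x,
        differentiable v x,
        differentiable (fun y => v y `^ m) x,
        (forall i : 'I_n, differentiable (partial (fun y => v y `^ m) i) x) &
        (n%:R - 1) / m * laplacian (fun y => v y `^ m) x
          + alpha * v x + beta * xdotgrad v x = 0].

Definition radial_profile {R : realType} {n : nat} (v : 'rV[R]_n -> R)
  (phi : R -> R) : Prop :=
  forall x : 'rV[R]_n, v x = phi (enorm x).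

(* Main.v *)
Require Import Defs.
From HB Require Import structures.
From mathcomp Require Import all_boot all_order all_algebra.
From mathcomp Require Import all_classical all_reals all_analysis.
From mathcomp Require Import ring lra.
Import Order.TTheory GRing.Theory Num.Theory.
Import numFieldNormedType.Exports.
Local Open Scope ring_scope.

Section S.
Context {R : realType}.
Local Open Scope classical_set_scope.

Lemma near_lt {f : R -> R} {s z : R} : f @ s --> f s -> f s < z ->
  exists2 e : R, 0 < e & forall y, `|s - y| < e -> f y < z.
Proof.
move=> cf fz; have H : \forall t \near s, f t < z by exact: cvgr_lt cf _ fz.
have [e /= e0 He] := (@nbhs_normP R R^o s (fun t => f t < z)).1 H.
by exists e => // y ys; exact: He.
Qed.

Lemma near_gt {f : R -> R} {s z : R} : f @ s --> f s -> z < f s ->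
  exists2 e : R, 0 < e & forall y, `|s - y| < e -> z < f y.
Proof.
move=> cf fz; have H : \forall t \near s, z < f t by exact: cvgr_gt cf _ fz.
have [e /= e0 He] := (@nbhs_normP R R^o s (fun t => z < f t)).1 H.
by exists e => // y ys; exact: He.
Qed.

Lemma der_cont {f : R -> R} {x d : R} : is_derive x (1:R) f d -> f @ x --> f x.
Proof.
move=> [df _]. exact/differentiable_continuous/derivable1_diffP.
Qed.

End S.
Section S2.
Context {R : realType}.
Local Open Scope classical_set_scope.

Lemma barrier (f df : R -> R) (a L0 L : R) : L0 < L ->
  (forall x, a <= x -> is_derive x (1:R) f (df x)) ->
  (forall x, a <= x -> L0 <= f x -> f x <= L -> 0 < df x) ->
  L <= f a -> forall b, a <= b -> L <= f b.
Proof.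
move=> L0L fd fpos fa b ab; rewrite leNgt; apply/negP => fb.
pose S := [set x | a <= x /\ x <= b /\ L <= f x].
have S0 : S !=set0 by exists a; split=> //; split.
have Shub : has_ubound S by exists b => x [_ []].
set s := sup S.
have as_ : a <= s by apply: ub_le_sup => //; split => //; split.
have sb : s <= b by apply: ge_sup => // x [_ []].
have cs := der_cont (fd s as_).
have fs : L <= f s.
  rewrite leNgt; apply/negP => fsL.
  have [e e0 He] := near_lt cs fsL.
  have sle : s - e < s by rewrite ltrBlDr ltrDl.
  have [y Sy ly] := sup_gt S0 sle.
  have ys : y <= s := ub_le_sup Shub Sy.
  have : `|s - y| < e by rewrite ger0_norm ?subr_ge0 // ltrBlDr -ltrBlDl.
  move/He; case: Sy => _ [_] Ly; rewrite ltNge Ly //.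
have sltb : s < b.
  rewrite lt_neqAle sb andbT; apply/eqP => sb'.
  by move: fb; rewrite -sb' ltNge fs.
have [e e0 He] := near_gt cs (lt_le_trans L0L fs).
pose x := Num.min b (s + e/2).
have sx : s < x by rewrite lt_min sltb /= ltrDl divr_gt0.
have xb : x <= b by rewrite ge_min lexx.
have xse : x <= s + e/2 by rewrite ge_min lexx orbT.
have notS : forall c, s < c -> c <= b -> f c < L.
  move=> c sc cb; rewrite ltNge; apply/negP => Lc.
  have : c <= s.
    apply: ub_le_sup => //; split; last by split.
    exact: le_trans as_ (ltW sc).
  by rewrite leNgt sc.
have fd' : forall c, c \in `]s, x[%R -> is_derive c (1:R) f (df c).
  move=> c; rewrite in_itv /= => /andP[sc _]; apply: fd; exact: le_trans as_ (ltW sc).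
have cont : {within `[s, x], continuous f}.
  apply: derivable_within_continuous => y yin.
  move: yin; rewrite in_itv /= => /andP[sy _].
  have := fd y (le_trans as_ sy); by case.
have [c cin eq] := MVT sx fd' cont.
  move: cin; rewrite in_itv /= => /andP[sc cx].
  have fcL : f c < L by apply: notS => //; exact: le_trans (ltW cx) xb.
  have L0c : L0 <= f c.
    apply/ltW/He; rewrite ltr0_norm ?subr_lt0 // opprB.
    have : c - s < e/2 by rewrite ltrBlDl (lt_le_trans cx xse).
    move=> h; apply: lt_trans h _; rewrite ltr_pdivrMr // ltr_pMr //.
    by rewrite ltr1n.
  have dpos : 0 < df c.
    apply: fpos; [exact: le_trans as_ (ltW sc)|exact: L0c|exact: ltW].
  have : f s < f x.
    by rewrite -subr_gt0 eq mulr_gt0 // subr_gt0.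
  have := notS x sx xb.
  move=> fxL fsx; have := lt_le_trans (lt_trans fsx fxL) fs; by rewrite ltxx.
Qed.
End S2.


Section S3.
Context {R : realType}.
Local Open Scope classical_set_scope.

Lemma incr (f df : R -> R) (a : R) :
  (forall x, a <= x -> is_derive x (1:R) f (df x)) ->
  (forall x, a <= x -> 0 <= df x) -> forall b, a <= b -> f a <= f b.
Proof.
move=> fd dpos b ab.
have fd' : forall c, c \in `]a, b[%R -> is_derive c (1:R) f (df c).
  by move=> c; rewrite in_itv /= => /andP[ac _]; apply: fd; exact: ltW.
have cont : {within `[a, b], continuous f}.
  apply: derivable_within_continuous => y yin.
  move: yin; rewrite in_itv /= => /andP[ay _].
  have := fd y ay; by case.
have [c cin eq] := MVT_segment ab fd' cont.
move: cin; rewrite in_itv /= => /andP[ac _].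
by rewrite -subr_ge0 eq mulr_ge0 // ?dpos // subr_ge0.
Qed.

End S3.


Section S4.
Context {R : realType}.
Variables (u u1 : R -> R).
Lemma dz_raw x d1 d2 : u x != 0 -> is_derive x (1:R) u d1 -> is_derive x (1:R) u1 d2 ->
  is_derive x (1:R) (fun r => r * u1 r / u r)
    (x * d2 / u x + u1 x / u x - x * u1 x * d1 / (u x ^+ 2)).
Proof.
move=> ux Du Du1.
have H := is_deriveM (is_deriveM (is_derive_id x (1:R)) Du1) (is_deriveV ux Du).
apply: (is_derive_eq H).
have sE : forall a b : R, a *: b = a * b by [].
have iE : (id * u1) x = x * u1 x by [].
rewrite !sE iE mulr1.
by field.
Qed.
End S4.


Section Core.
Context {R : realType}.

Lemma core (N m al be : R) (u u1 u2 P P1 : R -> R) :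
  0 < m -> m < 1 -> 1 < N -> 0 < be -> 0 < al ->
  m * al < be * (N - 2) -> m / (1 - m) < N - 2 ->
  (forall r : R, 0 < r -> 0 < u r) ->
  (forall r : R, 0 < r -> 0 < P r) ->
  (forall r : R, 0 < r -> is_derive r (1:R) u (u1 r)) ->
  (forall r : R, 0 < r -> is_derive r (1:R) u1 (u2 r)) ->
  (forall r : R, 0 < r -> is_derive r (1:R) P (P1 r)) ->
  (forall r : R, 0 < r -> u1 r * P r = m * u r * P1 r) ->
  (forall r : R, 0 < r -> (N - 1) / m * (u2 r + (N - 1) * (u1 r / r))
                        + al * P r + be * (r * P1 r) = 0) ->
  (forall c : R, c < 0 -> exists2 r0 : R, 0 < r0 & c < r0 * u1 r0 / u r0) ->
  exists2 e : R, 0 < e & forall R0 : R, exists r : R, R0 < r /\ e <= r ^+ 2 * P r / u r.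
Proof.
move=> m0 m1 N1 be0 al0 hD hK Hu HP Du Du1 DP Hch Hode Hinit.
have m0' : m != 0 by rewrite gt_eqF.
have m1' : 1 - m != 0 by rewrite gt_eqF // subr_gt0.
have m1p : 0 < 1 - m by rewrite subr_gt0.
have N1' : N - 1 != 0 by rewrite gt_eqF // subr_gt0.
have N1p : 0 < N - 1 by rewrite subr_gt0.
pose z := fun r => r * u1 r / u r.
pose Wf := fun r => r ^+ 2 * P r / u r.
pose num := fun r => - z r * (N - 2 + z r) - Wf r * (m * al + be * z r) / (N - 1).
have eP1 : forall x : R, 0 < x -> P1 x = u1 x * P x / (m * u x).
  move=> x x0; have ux : u x != 0 by rewrite gt_eqF // Hu.
  by rewrite Hch //; field; rewrite m0' ux.
have eu2 : forall x : R, 0 < x -> u2 x = - (N - 1) * (u1 x / x)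
    - m / (N - 1) * (al * P x + be * (x * P1 x)).
  move=> x x0.
  have E : u2 x = u2 x - m / (N - 1) * ((N - 1) / m * (u2 x + (N - 1) * (u1 x / x))
                        + al * P x + be * (x * P1 x)) by rewrite Hode // mulr0 subr0.
  rewrite {1}E; field; by rewrite m0' N1' gt_eqF.
have Dz : forall x : R, 0 < x -> is_derive x (1:R) z (num x / x).
  move=> x x0; have ux : u x != 0 by rewrite gt_eqF // Hu.
  apply: (is_derive_eq (@dz_raw R u u1 x _ _ ux (Du x x0) (Du1 x x0))).
  rewrite eu2 // eP1 // /num /z /Wf.
  field; by rewrite ux m0' N1' gt_eqF.
pose D := be * (N - 2) - m * al.
have D0 : 0 < D by rewrite subr_gt0.
pose K := N - 2 - m / (1 - m).
have K0 : 0 < K by rewrite subr_gt0.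
pose eta := Num.min (D / (2 * be)) (K / 2).
have eta0 : 0 < eta by rewrite lt_min !divr_gt0 ?mulr_gt0.
have etaD : eta <= D / (2 * be) by rewrite ge_min lexx.
have etaK : eta <= K / 2 by rewrite ge_min lexx orbT.
have beeta : be * eta <= D / 2.
  have h : be * eta <= be * (D / (2 * be)) by rewrite ler_pM2l.
  apply: le_trans h _.
  by rewrite le_eqVlt; apply/orP; left; apply/eqP; field; rewrite gt_eqF.
have mm0 : 0 < m / (1 - m) by rewrite divr_gt0.
pose L := - (N - 2) + eta.
pose M := - (m / (1 - m)).
have LM : L < M by rewrite /L /M /K in etaK *; lra.
have L0 : L < 0 by rewrite /L /K in etaK *; lra.
pose d := m / (1 - m) * eta.
have d0 : 0 < d by rewrite mulr_gt0.
pose e0 := eta * (N - 1) / (2 * (1 - m) * al).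
have e00 : 0 < e0 by rewrite divr_gt0 ?mulr_gt0.
have Wpos : forall x : R, 0 < x -> 0 < Wf x.
  by move=> x x0; rewrite /Wf divr_gt0 ?mulr_gt0 ?exprn_gt0 ?HP ?Hu.
have [r0 r00 zr0] := Hinit L L0.
have Z1 : forall x, r0 <= x -> L <= z x.
  apply: (@barrier R z (fun x => num x / x) r0 (- (N - 2)) L).
  - rewrite /L; lra.
  - by move=> x hx; apply: Dz; exact: lt_le_trans hx.
  - move=> x hx h1 h2; have x0 : 0 < x by exact: lt_le_trans hx.
    apply: divr_gt0 => //; rewrite /num.
    have W0 := Wpos x x0.
    set Z := z x in h1 h2 *; set Wv := Wf x in W0 *.
    have q0 : 0 < Wv / (N - 1) by rewrite divr_gt0.
    have -> : Wv * (m * al + be * Z) / (N - 1) = Wv / (N - 1) * (m * al + be * Z).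
      by rewrite mulrAC.
    have a1 : 0 <= - Z * (N - 2 + Z).
      have := L0; rewrite /L in h2 * => L0'.
      apply: mulr_ge0; lra.
    have a2 : m * al + be * Z < 0.
      have : be * Z <= be * L by rewrite ler_pM2l.
      rewrite /L /D in beeta *; lra.
    have a3 : Wv / (N - 1) * (m * al + be * Z) < 0 by rewrite pmulr_rlt0.
    lra.
  - exact: ltW.
exists e0 => // R0.
have [//|nex] := pselect (exists r : R, R0 < r /\ e0 <= r ^+ 2 * P r / u r).
exfalso.
have Wlt : forall r, R0 < r -> Wf r < e0.
  move=> r Rr; rewrite ltNge; apply/negP => h; apply: nex; exists r; split => //.
pose R1 := Num.max R0 r0 + 1.
have R0R1 : R0 < R1 by rewrite /R1 ltr_pwDr // le_max lexx.
have r0R1 : r0 < R1 by rewrite /R1 ltr_pwDr // le_max lexx orbT.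
have R1p : 0 < R1 by exact: lt_trans r00 r0R1.
have band : forall x, R1 <= x -> L <= z x -> z x <= M -> d / 2 <= num x.
  move=> x hx h1 h2; have x0 : 0 < x by exact: lt_le_trans hx.
  have W0 := Wpos x x0.
  have We : Wf x < e0 by apply: Wlt; exact: lt_le_trans hx.
  rewrite /num.
  set Z := z x in h1 h2 *; set Wv := Wf x in W0 We *.
  have -> : Wv * (m * al + be * Z) / (N - 1) = Wv / (N - 1) * (m * al + be * Z).
    by rewrite mulrAC.
  have b1 : d <= - Z * (N - 2 + Z).
    rewrite /d; apply: ler_pM; first exact: ltW.
    + exact: ltW.
    + by rewrite /M in h2; lra.
    + by rewrite /L in h1; lra.
  have b2 : Wv / (N - 1) * (m * al + be * Z) <= d / 2.
    have Z0 : Z <= 0 by rewrite /M in h2; lra.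
    have h3 : m * al + be * Z <= m * al.
      have : be * Z <= 0 by rewrite pmulr_rle0.
      lra.
    have q0 : 0 <= Wv / (N - 1) by rewrite divr_ge0 // ltW.
    apply: le_trans (ler_wpM2l q0 h3) _.
    have -> : d / 2 = e0 / (N - 1) * (m * al).
      rewrite /d /e0; field; by rewrite m1' N1' gt_eqF.
    apply: ler_wpM2r; first by rewrite mulr_ge0 // ltW.
    by apply: ler_wpM2r; [rewrite invr_ge0 ltW | exact: ltW].
  lra.
have dzpos : forall x, R1 <= x -> L <= z x -> z x <= M -> d / 2 / x <= num x / x.
  move=> x hx h1 h2; have x0 : 0 < x by exact: lt_le_trans hx.
  by rewrite ler_pM2r ?invr_gt0 // band.
have [r2 [R1r2 Mr2]] : exists r2, R1 <= r2 /\ M <= z r2.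
  have [//|nex2] := pselect (exists r2, R1 <= r2 /\ M <= z r2).
  exfalso.
  have zlt : forall r, R1 <= r -> z r < M.
    move=> r hr; rewrite ltNge; apply/negP => h; apply: nex2; exists r; by split.
  pose g := fun r : R => z r - d / 2 * ln r.
  have Dg : forall x, R1 <= x -> is_derive x (1:R) g (num x / x - d / 2 * x^-1).
    move=> x hx; have x0 : 0 < x by exact: lt_le_trans hx.
    apply: (is_derive_eq (is_deriveB (Dz x x0) (is_deriveZ (d / 2) (is_derive1_ln x0)))).
    by [].
  have gmono := @incr R g _ R1 Dg.
  have {}gmono : forall b, R1 <= b -> g R1 <= g b.
    apply: gmono => x hx; rewrite subr_ge0; apply: dzpos => //.
    - by apply: Z1; apply: ltW; exact: lt_le_trans hx.
    - exact: ltW (zlt x hx).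
  pose b := expR (ln R1 + 2 * (M - L) / d).
  have lnb : ln b = ln R1 + 2 * (M - L) / d by rewrite /b expRK.
  have R1b : R1 <= b.
    rewrite /b -[X in X <= _]lnK ?posrE // ler_expR lerDl.
    apply: divr_ge0; last exact: ltW.
    by apply: mulr_ge0; rewrite ?subr_ge0 ltW.
  have := gmono b R1b; rewrite /g lnb.
  have := zlt b R1b; have := Z1 R1 (ltW r0R1).
  have -> : d / 2 * (ln R1 + 2 * (M - L) / d) = d / 2 * ln R1 + (M - L).
    by field; rewrite gt_eqF.
  lra.
have r2p : 0 < r2 by exact: lt_le_trans R1p R1r2.
have ZM : forall x, r2 <= x -> M <= z x.
  apply: (@barrier R z (fun x => num x / x) r2 L M) => //.
  - by move=> x hx; apply: Dz; exact: lt_le_trans hx.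
  - move=> x hx h1 h2; have hx1 : R1 <= x by exact: le_trans hx.
    apply: lt_le_trans (dzpos x hx1 h1 h2).
    by rewrite !divr_gt0 // (lt_le_trans r2p hx).
pose h := fun r : R => r * P r / u r.
have Dh : forall x, r2 <= x -> is_derive x (1:R) h
    (x * P1 x / u x + P x / u x - x * P x * u1 x / (u x ^+ 2)).
  move=> x hx; have x0 : 0 < x by exact: lt_le_trans hx.
  have ux : u x != 0 by rewrite gt_eqF // Hu.
  exact: (@dz_raw R u P x _ _ ux (Du x x0) (DP x x0)).
have hmono := @incr R h _ r2 Dh.
have {}hmono : forall b, r2 <= b -> h r2 <= h b.
  apply: hmono => x hx; have x0 : 0 < x by exact: lt_le_trans hx.
  have ux : u x != 0 by rewrite gt_eqF // Hu.
  have -> : x * P1 x / u x + P x / u x - x * P x * u1 x / u x ^+ 2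
      = P x / u x * ((1 - m) / m * (z x + m / (1 - m))).
    rewrite eP1 // /z; field; by rewrite ux m0' m1'.
  apply: mulr_ge0; first by rewrite divr_ge0 // ltW ?HP ?Hu.
  apply: mulr_ge0; first by rewrite divr_ge0 // ltW.
  have := ZM x hx; rewrite /M; lra.
have hr2 : 0 < h r2 by rewrite /h !divr_gt0 ?mulr_gt0 ?HP ?Hu.
pose b := r2 + e0 / h r2.
have r2b : r2 <= b by rewrite /b lerDl divr_ge0 // ltW.
have R0b : R0 < b by apply: lt_le_trans R0R1 (le_trans R1r2 r2b).
have := Wlt b R0b; have := hmono b r2b.
have -> : Wf b = b * h b by rewrite /Wf /h expr2 !mulrA.
move=> hb Wb.
have : b * h r2 <= b * h b by rewrite ler_pM2l // (lt_le_trans r2p r2b).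
have -> : b * h r2 = r2 * h r2 + e0 by rewrite /b mulrDl divfK // gt_eqF.
have : 0 < r2 * h r2 by rewrite mulr_gt0.
lra.
Qed.
End Core.


Section G.
Context {R : realType} {n : nat}.
Implicit Types (g : 'rV[R]_n -> R).

Lemma quot_eq {g} {g2 : R -> R} {x v : 'rV[R]_n} {x2 : R} :
  (forall h : R, g (h *: v + x) = g2 (h + x2)) -> g x = g2 x2 ->
  (fun h : R => h^-1 *: ((g \o shift x) (h *: v) - g x)) =
  (fun h : R => h^-1 *: ((g2 \o shift x2) (h *: (1:R)) - g2 x2)).
Proof.
move=> H H0; apply/funext => h /=.
by rewrite H H0 [h *: 1]mulr1.
Qed.

Lemma derive_quot {g} {g2 : R -> R} {x v : 'rV[R]_n} {x2 : R} :
  (forall h : R, g (h *: v + x) = g2 (h + x2)) -> g x = g2 x2 ->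
  derive g x v = derive g2 x2 1.
Proof. by move=> H H0; rewrite /derive (quot_eq H H0). Qed.

Lemma derivable_quot {g} {g2 : R -> R} {x v : 'rV[R]_n} {x2 : R} :
  (forall h : R, g (h *: v + x) = g2 (h + x2)) -> g x = g2 x2 ->
  derivable g x v -> derivable g2 x2 1.
Proof. by move=> H H0; rewrite /derivable (quot_eq H H0). Qed.

Lemma line_deriv g (e : 'rV[R]_n) (s : R) :
  derivable g (s *: e) e ->
  is_derive s (1:R) (fun t => g (t *: e)) (derive g (s *: e) e).
Proof.
move=> dg.
have H : forall h : R, g (h *: e + s *: e) = (fun t => g (t *: e)) (h + s).
  by move=> h /=; rewrite scalerDl.
split; first exact: (derivable_quot (g2 := fun t => g (t *: e)) (x2 := s) H (erefl _) dg).
by rewrite (derive_quot (g2 := fun t => g (t *: e)) (x2 := s) H (erefl _)).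
Qed.

Lemma ebasisE (i j : 'I_n) : (ebasis i : 'rV[R]_n) ord0 j = (j == i)%:R.
Proof. by rewrite /ebasis mxE eqxx. Qed.

Lemma enorm_e0 (i0 : 'I_n) (s : R) : enorm (s *: (ebasis i0 : 'rV[R]_n)) = `|s|.
Proof.
rewrite /enorm (bigD1 i0) //= big1 => [|j ji].
  by rewrite mxE ebasisE eqxx mulr1 addr0 sqrtr_sqr.
by rewrite mxE ebasisE (negbTE ji) mulr0 expr0n.
Qed.

Lemma enorm_2 (i0 i : 'I_n) (a b : R) : i != i0 ->
  enorm (a *: (ebasis i0 : 'rV[R]_n) + b *: ebasis i) = Num.sqrt (a ^+ 2 + b ^+ 2).
Proof.
move=> ii0; rewrite /enorm (bigD1 i0) //= (bigD1 i) //= big1 => [|j /andP[ji0 ji]].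
  rewrite !mxE !eqxx /= (eq_sym i0 i) (negbTE ii0).
  by rewrite !mulr0 !mulr1 addr0 add0r addr0.
by rewrite !mxE /= (negbTE ji0) (negbTE ji) !mulr0 addr0 expr0n.
Qed.


Lemma deriv_k (r t : R) : 0 < r ->
  is_derive t (1:R) (fun h : R => Num.sqrt (r ^+ 2 + h ^+ 2))
    (t / Num.sqrt (r ^+ 2 + t ^+ 2)).
Proof.
move=> r0.
have q0 : 0 < r ^+ 2 + t ^+ 2 by rewrite ltr_pwDl ?sqr_ge0 ?exprn_gt0.
have Dq : is_derive t (1:R) (fun h : R => r ^+ 2 + h ^+ 2) (2 * t).
  apply: (is_derive_eq (is_deriveD (is_derive_cst (r ^+ 2) t 1)
          (is_deriveX 2 (is_derive_id t (1:R))))).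
  by rewrite add0r /= expr1 [_ *: _]mulr1.
have H := is_derive1_comp (g := fun h : R => r ^+ 2 + h ^+ 2) (is_derive1_sqrt q0) Dq.
apply: (is_derive_eq H).
have s0 : Num.sqrt (r ^+ 2 + t ^+ 2) != 0 by rewrite gt_eqF // sqrtr_gt0.
by field.
Qed.

Lemma partial_off (f : 'rV[R]_n -> R) (i0 i : 'I_n) (g1 : R -> R) (r t : R) :
  i != i0 -> 0 < r ->
  (forall y, f y = f (enorm y *: ebasis i0)) ->
  (forall s : R, 0 < s -> is_derive s (1:R) (fun s => f (s *: ebasis i0)) (g1 s)) ->
  partial f i (r *: ebasis i0 + t *: ebasis i) =
    g1 (Num.sqrt (r ^+ 2 + t ^+ 2)) * (t / Num.sqrt (r ^+ 2 + t ^+ 2)).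
Proof.
move=> ii0 r0 rad DG.
pose k := fun h : R => Num.sqrt (r ^+ 2 + h ^+ 2).
pose G := fun s : R => f (s *: ebasis i0).
have H : forall h : R, f (h *: ebasis i + (r *: ebasis i0 + t *: ebasis i))
                     = (G \o k) (h + t).
  move=> h; rewrite /G /k /= rad; congr (f (_ *: _)).
  rewrite -(enorm_2 _ _ _ _ ii0); congr enorm.
  by rewrite scalerDl addrCA.
have H0 : f (r *: ebasis i0 + t *: ebasis i) = (G \o k) t.
  by rewrite /G /k /= rad (enorm_2 _ _ _ _ ii0).
rewrite /partial (derive_quot H H0).
have k0 : 0 < k t by rewrite /k sqrtr_gt0 ltr_pwDl ?sqr_ge0 ?exprn_gt0.
have HD := is_derive1_comp (g := k) (DG (k t) k0) (deriv_k r t r0).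
by rewrite (@derive_val _ _ _ _ _ _ _ HD) mulrC.
Qed.


Lemma partial2_off (f : 'rV[R]_n -> R) (i0 i : 'I_n) (g1 : R -> R) (r : R) :
  i != i0 -> 0 < r ->
  (forall y, f y = f (enorm y *: ebasis i0)) ->
  (forall s : R, 0 < s -> is_derive s (1:R) (fun s => f (s *: ebasis i0)) (g1 s)) ->
  {for r, continuous g1} ->
  partial (partial f i) i (r *: ebasis i0) = g1 r / r.
Proof.
move=> ii0 r0 rad DG cg.
pose k := fun h : R => Num.sqrt (r ^+ 2 + h ^+ 2).
have k0r : k 0 = r by rewrite /k expr0n addr0 sqrtr_sqr ger0_norm // ltW.
pose Fn := fun h : R => g1 (k h) / k h.
have E : forall h : R, h != 0 ->
    h^-1 *: ((partial f i \o shift (r *: ebasis i0)) (h *: ebasis i)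
             - partial f i (r *: ebasis i0)) = Fn h.
  move=> h h0 /=.
  have -> : h *: ebasis i + r *: ebasis i0 = r *: ebasis i0 + h *: ebasis i
    by rewrite addrC.
  rewrite (partial_off f i0 i g1 r h ii0 r0 rad DG).
  have -> : r *: ebasis i0 = r *: (ebasis i0 : 'rV[R]_n) + 0 *: ebasis i
    by rewrite scale0r addr0.
  rewrite (partial_off f i0 i g1 r 0 ii0 r0 rad DG) mul0r mulr0 subr0 /Fn -/(k h).
  have kh : k h != 0 by rewrite gt_eqF // /k sqrtr_gt0 ltr_pwDl ?sqr_ge0 ?exprn_gt0.
  have sE : forall a b : R, a *: b = a * b by [].
  rewrite sE; field; by rewrite kh h0.
rewrite /partial /derive; apply: (cvg_lim (@norm_hausdorff _ R^o)).
have cFn : {for 0, continuous Fn}.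
  have ck : {for 0, continuous k} := der_cont (deriv_k r 0 r0).
  apply: continuousM.
    apply: continuous_comp => //; by rewrite k0r.
  by apply: continuousV => //; rewrite k0r gt_eqF.
have := (continuous_withinNx Fn 0).1 cFn.
rewrite /Fn k0r => HF.
apply: cvg_trans HF.
apply: near_eq_cvg; near=> h.
have hn0 : h != 0 by near: h; exact: nbhs_dnbhs_neq.
by rewrite E.
Unshelve. all: by end_near.
Qed.

End G.


Theorem lemma3p3 (R : realType) (n : nat) (m rho alpha beta : R)
  (v : 'rV[R]_n -> R) (phi : R -> R) :
  (3 <= n)%N ->
  0 < m -> m < (n%:R - 2) / n%:R ->
  0 < rho ->
  alpha = (2 * beta + rho) / (1 - m) ->
  m * rho / (n%:R - 2 - m * n%:R) < beta ->
  n%:R * beta < alpha ->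
  is_solution m alpha beta v ->
  radial_profile v phi ->
  let w := fun r : R => r ^+ 2 * phi r `^ (1 - m) in
  let w_inf := 2 * (n%:R - 1) * (n%:R * (1 - m) - 2)
               / ((1 - m) * (alpha * (1 - m) - 2 * beta)) in
  exists eps : R, 0 < eps /\ eps < Num.min 1 (w_inf / 2) /\
    forall R0 : R, 1 < R0 -> exists r' : R, R0 < r' /\ eps <= w r'.
Proof.
move=> hn m0 hmN rho0 hal hbe hnb Hsol Hrad w w_inf.
set N : R := n%:R.
have N3 : 3 <= N by rewrite /N (ler_nat R 3 n).
have N0 : 0 < N by lra.
have mN : m * N < N - 2 by rewrite -ltr_pdivlMr.
have m1 : m < 1.
  by rewrite -(ltr_pM2r N0) mul1r; lra.
have m1p : 0 < 1 - m by rewrite subr_gt0.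
have den0 : 0 < N - 2 - m * N by lra.
have hbe' : m * rho < beta * (N - 2 - m * N) by rewrite -ltr_pdivrMr.
have be0 : 0 < beta.
  have : 0 < m * rho by rewrite mulr_gt0.
  move=> h; rewrite -(pmulr_rgt0 _ den0) mulrC; lra.
have al0 : 0 < alpha by apply: lt_trans hnb; rewrite mulr_gt0.
have hD : m * alpha < beta * (N - 2).
  rewrite hal mulrA ltr_pdivrMr //; lra.
have hK : m / (1 - m) < N - 2.
  rewrite ltr_pdivrMr //; lra.
have n0 : (0 < n)%N by apply: leq_trans hn.
pose i0 : 'I_n := Ordinal n0.
pose e0 : 'rV[R]_n := ebasis i0.
pose f := fun y => v y `^ m.
have radv : forall y, v y = v (enorm y *: e0).
  move=> y; rewrite !Hrad /e0 enorm_e0 ger0_norm // /enorm sqrtr_ge0 //.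
have radf : forall y, f y = f (enorm y *: e0) by move=> y; rewrite /f {1}radv.
pose u := fun s : R => f (s *: e0).
pose u1 := fun s : R => partial f i0 (s *: e0).
pose u2 := fun s : R => partial (partial f i0) i0 (s *: e0).
pose P := fun s : R => v (s *: e0).
pose P1 := fun s : R => partial v i0 (s *: e0).
have Du : forall s : R, is_derive s (1:R) u (u1 s).
  move=> s; apply: line_deriv; apply: diff_derivable.
  by case: (Hsol (s *: e0)).
have Du1 : forall s : R, is_derive s (1:R) u1 (u2 s).
  move=> s; apply: line_deriv; apply: diff_derivable.
  by case: (Hsol (s *: e0)).
have DP : forall s : R, is_derive s (1:R) P (P1 s).
  move=> s; apply: line_deriv; apply: diff_derivable.
  by case: (Hsol (s *: e0)).
have HP : forall s : R, 0 < P s by move=> s; case: (Hsol (s *: e0)).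
have Hu : forall s : R, 0 < u s by move=> s; apply: powR_gt0; exact: (HP s).
have Hch : forall r : R, 0 < r -> u1 r * P r = m * u r * P1 r.
  move=> r _.
  have h1 := is_derive1_comp (g := P) (is_derive1_powR m (HP r)) (DP r).
  have e1 : u1 r = 'D_1 u r by rewrite (@derive_val _ _ _ _ _ _ _ (Du r)).
  have e2 : 'D_1 u r = m * P r `^ (m - 1) * P1 r.
    by rewrite (@derive_val _ _ _ _ _ _ _ h1).
  rewrite e1 e2.
  have Pn0 : P r != 0 by rewrite gt_eqF.
  have -> : u r = P r `^ (m - 1) * P r.
    rewrite -[X in _ * X]powRr1 ?ltW // -powRD; last by rewrite Pn0 implybT.
    by rewrite subrK.
  ring.
have lap : forall r : R, 0 < r ->
    laplacian f (r *: e0) = u2 r + (N - 1) * (u1 r / r).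
  move=> r r0; rewrite /laplacian (bigD1 i0) //=; congr (_ + _).
  rewrite (eq_bigr (fun=> u1 r / r)).
    rewrite sumr_const cardC1 card_ord -mulr_natl -subn1 natrB //.
  move=> i ii0; apply: (partial2_off f i0 i u1 r) => //.
  exact: der_cont (Du1 r).
have xdg : forall r : R, xdotgrad v (r *: e0) = r * P1 r.
  move=> r; rewrite /xdotgrad (bigD1 i0) //= big1 => [|i ii0].
    by rewrite addr0 mxE /e0 ebasisE eqxx mulr1.
  by rewrite mxE /e0 ebasisE (negbTE ii0) mulr0 mul0r.
have Hode : forall r : R, 0 < r -> (N - 1) / m * (u2 r + (N - 1) * (u1 r / r))
                        + alpha * P r + beta * (r * P1 r) = 0.
  move=> r r0; rewrite -lap // -xdg.
  by case: (Hsol (r *: e0)).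
have Hinit : forall c : R, c < 0 -> exists2 r0 : R, 0 < r0 & c < r0 * u1 r0 / u r0.
  move=> c c0.
  pose z := fun s : R => s * u1 s / u s.
  have cz : {for 0, continuous ((fun s : R => s * u1 s) \* (fun s => (u s)^-1))}.
    apply: continuousM; first apply: (@continuousM _ R^o).
    - exact: cvg_id.
    - exact: der_cont (Du1 0).
    - by apply: continuousV; [rewrite gt_eqF | exact: der_cont (Du 0)].
  have cz0 : c < ((fun s : R => s * u1 s) \* (fun s => (u s)^-1)) 0 by rewrite /= !mul0r.
  have [e e0' He] := near_gt cz cz0.
  exists (e / 2); first by rewrite divr_gt0.
  apply: He; rewrite sub0r normrN ger0_norm ?divr_ge0 ?ltW //.
  by rewrite ltr_pdivrMr // ltr_pMr // ltr1n.
have N1 : 1 < N by lra.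
have [e e0' He] := core N m alpha beta u u1 u2 P P1 m0 m1 N1 be0 al0 hD hK (fun r _ => Hu r) (fun r _ => HP r)
  (fun r _ => Du r) (fun r _ => Du1 r) (fun r _ => DP r) Hch Hode Hinit.
have winf0 : 0 < w_inf.
  have a1 : 0 < N - 1 by lra.
  have a2 : 0 < N * (1 - m) - 2.
    have -> : N * (1 - m) = N - m * N by ring.
    lra.
  have a3 : 0 < alpha * (1 - m) - 2 * beta.
    rewrite hal divfK ?gt_eqF //; lra.
  rewrite /w_inf -/N divr_gt0 // ?mulr_gt0 //.
pose c := Num.min 1 (w_inf / 2).
have c0 : 0 < c by rewrite lt_min ltr01 divr_gt0.
exists (Num.min e (c / 2)); split; first by rewrite lt_min e0' divr_gt0.
split.
  rewrite gt_min; apply/orP; right.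
  by rewrite ltr_pdivrMr // ltr_pMr // ltr1n.
move=> R0 R01; have [r [Rr er]] := He R0; exists r; split => //.
have r0 : 0 < r by lra.
rewrite ge_min; apply/orP; left.
apply: (le_trans er); rewrite le_eqVlt; apply/orP; left; apply/eqP.
rewrite /w.
have Pr : phi r = P r by rewrite /P Hrad /e0 enorm_e0 ger0_norm // ltW.
have Pn0 : P r != 0 by rewrite gt_eqF.
rewrite Pr powRB; last by rewrite Pn0 implybT.
by rewrite powRr1 ?ltW // mulrA.
Qed.
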